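(* Let $S=(n,\phi,F)$ be a semicoherent system whose joint lifetime distribution $F$ has no ties, and let $T$ be the system lifetime. Then for every $j\in[n]$, $$I_{\mathrm{BP}}^{(j)}:=\Pr(T=X_j)=\sum_{A\subseteq[n]\setminus\{j\}}q_j(A)\,\big(\phi(A\cup\{j\})-\phi(A)\big)=\sum_{A\subseteq[n]}(-1)^{|\{j\}\setminus A|}\,q_j(A\setminus\{j\})\,\phi(A).$$
   Context: $[n]=\{1,\ldots,n\}$. Boolean vectors $\mathbf{x}\in\{0,1\}^n$ are identified with subsets $A\subseteq[n]$ via $x_i=1\iff i\in A$, so $\phi$ is viewed both as a function on $\{0,1\}^n$ and on $2^{[n]}$. A semicoherent system $S=(n,\phi,F)$ consists of a structure function $\phi:\{0,1\}^n\to\{0,1\}$ that is nondecreasing in each variable with $\phi(\varnothing)=0$, $\phi([n])=1$, and the joint c.d.f. $F$ of nonnegative component lifetimes $X_1,\ldots,X_n$. $F$ has no ties if $\Pr(X_i=X_k)=0$ for all $i\neq k$. At time $t$ component $i$ is working iff $X_i>t$; the system lifetime is $T=\inf\{t\geq0:\phi(\{i: X_i>t\})=0\}$. For $j\in[n]$, $A\subseteq[n]\setminus\{j\}$: $q_j(A)=\Pr\big(\max_{i\notin A\cup\{j\}}X_i<X_j<\min_{i\in A}X_i\big)$ (max over empty set $=-\infty$, min over empty set $=+\infty$). *)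

(* Defs.v *)
From Stdlib Require Import Reals.
From mathcomp Require Import all_boot.
Set Implicit Arguments. Unset Strict Implicit. Unset Printing Implicit Defensive.

Definition sigma_algebra (Omega : Type) (Ev : (Omega -> Prop) -> Prop) : Prop :=
  Ev (fun _ => True) /\
  (forall E, Ev E -> Ev (fun w => ~ E w)) /\
  (forall E : nat -> Omega -> Prop, (forall k, Ev (E k)) ->
     Ev (fun w => exists k, E k w)).

Definition probability (Omega : Type) (Ev : (Omega -> Prop) -> Prop)
  (P : (Omega -> Prop) -> R) : Prop :=
  sigma_algebra Ev /\
  (forall E, Ev E -> Rle 0 (P E)) /\
  P (fun _ => True) = R1 /\
  (forall E : nat -> Omega -> Prop,
     (forall k, Ev (E k)) ->
     (forall k l w, k <> l -> E k w -> E l w -> False) ->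
     infinite_sum (fun k => P (E k)) (P (fun w => exists k, E k w))).

Definition random_variable (Omega : Type) (Ev : (Omega -> Prop) -> Prop)
  (Y : Omega -> R) : Prop :=
  forall t : R, Ev (fun w => Rle (Y w) t).

Definition no_ties (Omega : Type) (P : (Omega -> Prop) -> R) (n : nat)
  (X : 'I_n -> Omega -> R) : Prop :=
  forall i k : 'I_n, i <> k -> P (fun w => X i w = X k w) = R0.

Definition semicoherent (n : nat) (phi : {set 'I_n} -> bool) : Prop :=
  (forall A B : {set 'I_n}, A \subset B -> phi A -> phi B) /\
  phi set0 = false /\ phi setT = true.

Definition b2R (b : bool) : R := if b then R1 else R0.

Definition is_glb (S : R -> Prop) (m : R) : Prop :=
  (forall t, S t -> Rle m t) /\
  (forall m', (forall t, S t -> Rle m' t) -> Rle m' m).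

Definition failed_times (Omega : Type) (n : nat) (phi : {set 'I_n} -> bool)
  (X : 'I_n -> Omega -> R) (w : Omega) : R -> Prop :=
  fun t => Rle R0 t /\
    phi [set i : 'I_n | Rlt_dec t (X i w) : bool] = false.

(* T(w) = inf {t >= 0 : phi({i : X_i(w) > t}) = 0};  "T = y" *)
Definition lifetime_is (Omega : Type) (n : nat) (phi : {set 'I_n} -> bool)
  (X : 'I_n -> Omega -> R) (w : Omega) (y : R) : Prop :=
  is_glb (failed_times phi X w) y.

Definition q (Omega : Type) (P : (Omega -> Prop) -> R) (n : nat)
  (X : 'I_n -> Omega -> R) (j : 'I_n) (A : {set 'I_n}) : R :=
  P (fun w => (forall i, i \notin A -> i != j -> Rlt (X i w) (X j w)) /\
              (forall i, i \in A -> Rlt (X j w) (X i w))).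

(* Main.v *)
Require Import Defs.
From Stdlib Require Import Reals ZArith Lra Lia Classical ClassicalEpsilon FunctionalExtensionality PropExtensionality.
From HB Require Import structures.
From mathcomp Require Import all_boot.
Set Implicit Arguments. Unset Strict Implicit. Unset Printing Implicit Defensive.
Open Scope R_scope.

Lemma pred_ext (T : Type) (E F : T -> Prop) : (forall w, E w <-> F w) -> E = F.
Proof. move=> h; apply: functional_extensionality => w; apply: propositional_extensionality; exact: h. Qed.

Section SA.
Variables (Omega : Type) (Ev : (Omega -> Prop) -> Prop).
Hypothesis hS : sigma_algebra Ev.

Lemma Ev_ext (E F : Omega -> Prop) : (forall w, E w <-> F w) -> Ev E -> Ev F.
Proof. by move=> h; rewrite (pred_ext h). Qed.

Lemma Ev_True : Ev (fun _ => True).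
Proof. by case: hS. Qed.

Lemma Ev_not E : Ev E -> Ev (fun w => ~ E w).
Proof. by case: hS => _ [h _]; apply: h. Qed.

Lemma Ev_count (E : nat -> Omega -> Prop) : (forall k, Ev (E k)) -> Ev (fun w => exists k, E k w).
Proof. by case: hS => _ [_ h]; apply: h. Qed.

Lemma Ev_False : Ev (fun _ => False).
Proof. apply: (Ev_ext _ (Ev_not Ev_True)) => w; tauto. Qed.

Lemma Ev_or A B : Ev A -> Ev B -> Ev (fun w => A w \/ B w).
Proof.
move=> hA hB.
apply: (Ev_ext _ (@Ev_count (fun k => match k with 0%N => A | _ => B end) _)).
- move=> w; split; first by case=> [[|k]] h; [left|right].
  by case=> h; [exists 0%N | exists 1%N].
- by case.
Qed.

Lemma Ev_and A B : Ev A -> Ev B -> Ev (fun w => A w /\ B w).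
Proof.
move=> hA hB; apply: (Ev_ext _ (Ev_not (Ev_or (Ev_not hA) (Ev_not hB)))) => w.
tauto.
Qed.

Lemma Ev_forall_seq (T : eqType) (s : seq T) (E : T -> Omega -> Prop) :
  (forall x, Ev (E x)) -> Ev (fun w => forall x, x \in s -> E x w).
Proof.
move=> hE; elim: s => [|x s IH].
  by apply: (Ev_ext _ Ev_True) => w; split=> // _ x; rewrite in_nil.
apply: (Ev_ext _ (Ev_and (hE x) IH)) => w; split.
  by case=> h1 h2 y; rewrite in_cons => /orP [/eqP -> //|]; apply: h2.
move=> h; split; first by apply: h; rewrite mem_head.
by move=> y hy; apply: h; rewrite in_cons hy orbT.
Qed.

Lemma Ev_forall_fin (T : finType) (E : T -> Omega -> Prop) :
  (forall x, Ev (E x)) -> Ev (fun w => forall x, E x w).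
Proof.
move=> hE; apply: (Ev_ext _ (Ev_forall_seq (enum T) hE)) => w; split.
  by move=> h x; apply: h; rewrite mem_enum.
by move=> h x _.
Qed.

Definition zof (a : nat) (s : bool) : Z := if s then Z.of_nat a else Z.opp (Z.of_nat a).

Definition Erat (U V : Omega -> R) (k : nat) (w : Omega) : Prop :=
  match (unpickle k : option (nat * nat * bool)) with
  | Some (a, b, s) => U w <= IZR (zof a s) / INR b /\ ~ (V w <= IZR (zof a s) / INR b)
  | None => False
  end.

Lemma zof_surj z : exists a s, zof a s = z.
Proof.
case: z => [|p|p]; first by exists 0%N, true.
- by exists (Pos.to_nat p), true; rewrite /zof positive_nat_Z.
- by exists (Pos.to_nat p), false; rewrite /zof positive_nat_Z.
Qed.

Lemma Ev_lt (U V : Omega -> R) :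
  (forall t, Ev (fun w => U w <= t)) -> (forall t, Ev (fun w => V w <= t)) ->
  Ev (fun w => U w < V w).
Proof.
move=> hU hV.
have hE : forall k, Ev (Erat U V k).
  move=> k; rewrite /Erat; case: (unpickle k) => [[[a b] s]|]; last exact: Ev_False.
  exact: Ev_and (hU _) (Ev_not (hV _)).
apply: (Ev_ext _ (Ev_count hE)) => w; split.
  case=> k; rewrite /Erat; case: (unpickle k) => [[[a b] s]|] //; case=> h1 h2.
  lra.
move=> hlt.
have [N HN] := @INR_archimed (V w - U w) 1 ltac:(lra).
have hN : 0 < INR N.
  have := pos_INR N => h0.
  case: (Rle_lt_or_eq_dec _ _ h0) => // h; rewrite -h in HN; lra.
have [hz1 hz2] := archimed (U w * INR N).
set z := up (U w * INR N) in hz1 hz2 *.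
have [a [s hs]] := zof_surj z.
exists (pickle (a, N, s)); rewrite /Erat pickleK hs.
set r := IZR z / INR N.
have hr : r * INR N = IZR z by rewrite /r; field; lra.
have h1 : (r - U w) * INR N > 0 by nra.
have h2 : (V w - r) * INR N > 0 by nra.
have h3 : 0 < r - U w by apply: (Rmult_lt_reg_r (INR N)) => //; lra.
have h4 : 0 < V w - r by apply: (Rmult_lt_reg_r (INR N)) => //; lra.
split; lra.
Qed.

End SA.

Lemma Rplus_assoc' : associative Rplus.
Proof. move=> x y z; ring. Qed.
Lemma Rmult_0l : left_zero R0 Rmult.
Proof. move=> x; ring. Qed.
Lemma Rmult_0r : right_zero R0 Rmult.
Proof. move=> x; ring. Qed.
Lemma Rmult_plus_l : left_distributive Rmult Rplus.
Proof. move=> x y z; ring. Qed.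
Lemma Rmult_plus_r : right_distributive Rmult Rplus.
Proof. move=> x y z; ring. Qed.
Lemma Rplus_0l : left_id R0 Rplus.
Proof. move=> x; ring. Qed.

HB.instance Definition _ := Monoid.isComLaw.Build R R0 Rplus Rplus_assoc' Rplus_comm Rplus_0l.
HB.instance Definition _ := Monoid.isMulLaw.Build R R0 Rmult Rmult_0l Rmult_0r.
HB.instance Definition _ := Monoid.isAddLaw.Build R Rmult Rplus Rmult_plus_l Rmult_plus_r.

Section Prob.
Variables (Omega : Type) (Ev : (Omega -> Prop) -> Prop) (P : (Omega -> Prop) -> R).
Hypothesis hP : probability Ev P.

Lemma hS : sigma_algebra Ev. Proof. by case: hP. Qed.
Lemma P_ge0 E : Ev E -> 0 <= P E. Proof. by case: hP => _ [h _]; apply: h. Qed.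

Lemma P_empty : P (fun _ => False) = 0.
Proof.
case: hP => _ [_ [_ hadd]].
have := hadd (fun _ _ => False) (fun _ => Ev_False hS) (fun _ _ _ _ h _ => h).
rewrite (@pred_ext _ (fun w => exists k : nat, False) (fun _ => False)); last first.
  by move=> w; split=> // [[]].
set c := P _ => hs.
have hsum : forall m, sum_f_R0 (fun _ => c) m = INR m * c + c.
  elim=> [|m IH] /=; first ring.
  rewrite IH; case: m {IH} => [|m] /=; ring.
case: (Req_dec c 0) => // hc0.
have hc : 0 < Rabs c by apply: Rabs_pos_lt.
have [N HN] := hs _ hc.
have := HN (S N) ltac:(lia); rewrite /R_dist hsum.
have -> : INR (S N) * c + c - c = INR (S N) * c by ring.
rewrite Rabs_mult Rabs_pos_eq; last exact: pos_INR.
have : 1 <= INR (S N) by rewrite S_INR; have := pos_INR N; lra.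
nra.
Qed.

Lemma P_union2 A B : Ev A -> Ev B -> (forall w, A w -> B w -> False) ->
  P (fun w => A w \/ B w) = P A + P B.
Proof.
move=> hA hB hAB; case: hP => _ [_ [_ hadd]].
pose E k := match k with 0%N => A | 1%N => B | _ => fun _ => False end.
have hE : forall k, Ev (E k) by case=> [|[|k]] //=; apply: Ev_False hS.
have hd : forall k l w, k <> l -> E k w -> E l w -> False.
  move=> k l w; case: k => [|[|k]]; case: l => [|[|l]] //= hkl;
  try (by move=> _ []); try (by move=> []).
  - by move=> ? ?; apply: (hAB w).
  - by move=> ? ?; apply: (hAB w).
have := hadd E hE hd.
rewrite (@pred_ext _ (fun w => exists k, E k w) (fun w => A w \/ B w)); last first.
  move=> w; split; first by case=> [[|[|k]]] //= h; [left|right].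
  by case=> h; [exists 0%N | exists 1%N].
move=> h1; apply: (uniqueness_sum _ _ _ h1) => eps heps; exists 1%N => m hm.
have -> : sum_f_R0 (fun k => P (E k)) m = P A + P B.
  elim: m hm => [|m IH] hm; first lia.
  case: m IH hm => [|m] IH hm /=; first by [].
  rewrite /= in IH; rewrite IH; last lia.
  rewrite P_empty; ring.
by rewrite /R_dist Rminus_diag Rabs_R0.
Qed.

End Prob.


Definition pb (Q : Prop) : bool := if excluded_middle_informative Q then true else false.
Lemma pbP Q : pb Q = true <-> Q.
Proof. by rewrite /pb; case: excluded_middle_informative. Qed.
Lemma pbF Q : pb Q = false <-> ~ Q.
Proof. by rewrite /pb; case: excluded_middle_informative. Qed.

Lemma false_and (A : Prop) : (is_true false /\ A) <-> False.
Proof. by split=> // -[]. Qed.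

Lemma true_and (A : Prop) : (is_true true /\ A) <-> A.
Proof. by split=> // -[]. Qed.

Section Pat.
Variables (Omega : Type) (Ev : (Omega -> Prop) -> Prop) (P : (Omega -> Prop) -> R)
  (n : nat) (X : 'I_n -> Omega -> R).
Hypothesis hP : probability Ev P.
Hypothesis hX : forall i, random_variable Ev (X i).

Definition Y (a : option 'I_n) (w : Omega) : R := match a with Some i => X i w | None => R0 end.
Notation ptype := {ffun (option 'I_n * option 'I_n) -> bool}.
Definition pat (w : Omega) : ptype := [ffun ab => Rlt_dec (Y ab.1 w) (Y ab.2 w) : bool].

Lemma pat_bool w w' a b : pat w = pat w' ->
  (Rlt_dec (Y a w) (Y b w) : bool) = Rlt_dec (Y a w') (Y b w').
Proof. by move=> e; have := congr1 (fun f : ptype => f (a, b)) e; rewrite /= !ffunE. Qed.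

Lemma pat_lt w w' a b : pat w = pat w' -> (Y a w < Y b w <-> Y a w' < Y b w').
Proof.
move=> /(pat_bool a b); case: Rlt_dec; case: Rlt_dec => // h1 h2 _; tauto.
Qed.

Lemma Y_rv a t : Ev (fun w => Y a w <= t).
Proof.
case: a => [i|]; first exact: hX.
have hS' := hS hP.
case: (Rle_dec R0 t) => h.
  by apply: (Ev_ext _ (Ev_True hS')) => w.
by apply: (Ev_ext _ (Ev_False hS')) => w.
Qed.

Lemma Ev_pat p : Ev (fun w => pat w = p).
Proof.
have hS' := hS hP.
apply: (Ev_ext (E := fun w => forall ab, (Rlt_dec (Y ab.1 w) (Y ab.2 w) : bool) = p ab)).
  move=> w; split.
    by move=> h; apply/ffunP => ab; rewrite ffunE.
  by move=> <- ab; rewrite ffunE.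
apply: Ev_forall_fin => // ab.
case hp: (p ab).
  apply: (Ev_ext _ (Ev_lt hS' (Y_rv ab.1) (Y_rv ab.2))) => w.
  by case: Rlt_dec.
apply: (Ev_ext _ (Ev_not hS' (Ev_lt hS' (Y_rv ab.1) (Y_rv ab.2)))) => w.
by case: Rlt_dec.
Qed.

Definition pinv (E : Omega -> Prop) := forall w w', pat w = pat w' -> E w -> E w'.
Definition Pp (p : ptype) := P (fun w => pat w = p).
Definition term (E : Omega -> Prop) (p : ptype) :=
  if pb (exists w, pat w = p /\ E w) then Pp p else R0.

Lemma P_decomp_seq E (s : seq ptype) : pinv E -> uniq s ->
  Ev (fun w => pat w \in s /\ E w) /\
  P (fun w => pat w \in s /\ E w) = \big[Rplus/R0]_(p <- s) term E p.
Proof.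
have hS' := hS hP.
move=> hE; elim: s => [|x s IH] /=.
  move=> _; rewrite big_nil.
  split; first by apply: (Ev_ext _ (Ev_False hS')) => w; rewrite in_nil false_and; tauto.
  transitivity (P (fun _ => False)); last exact: P_empty hP.
  congr P; apply: pred_ext => w; rewrite in_nil false_and; tauto.
move=> /andP [hx hs]; have [IH1 IH2] := IH hs.
have hA : Ev (fun w => pat w = x /\ E w) /\ P (fun w => pat w = x /\ E w) = term E x.
  rewrite /term; case hb: (pb _).
    have [w0 [hw0 hEw0]] := (pbP _).1 hb.
    have e : (fun w => pat w = x /\ E w) = (fun w => pat w = x).
      apply: pred_ext => w; split; first by case.
      by move=> hw; split=> //; apply: (hE w0) => //; rewrite hw0 hw.
    by rewrite e; split; [apply: Ev_pat|].
  have e : (fun w => pat w = x /\ E w) = (fun _ => False).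
    apply: pred_ext => w; split=> // h; apply: ((pbF _).1 hb); by exists w.
  by rewrite e; split; [apply: Ev_False hS' | apply: P_empty hP].
have e : (fun w => pat w \in x :: s /\ E w) =
         (fun w => (pat w = x /\ E w) \/ (pat w \in s /\ E w)).
  apply: pred_ext => w; rewrite in_cons; split.
    by case=> /orP [/eqP h|h] h'; [left|right].
  by case=> [[-> h]|[h h']]; rewrite ?eqxx ?h ?orbT.
rewrite e big_cons; split; first exact: Ev_or (hA.1) IH1.
case: hA => hA1 hA2; rewrite -hA2 -IH2; apply: (P_union2 hP hA1 IH1).
by move=> w [h1 _] [h2 _]; rewrite h1 in h2; rewrite h2 in hx.
Qed.

Lemma P_decomp E : pinv E -> P E = \big[Rplus/R0]_(p : ptype) term E p.
Proof.
move=> hE; have [_ <-] := P_decomp_seq hE (index_enum_uniq ptype).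
congr P; apply: pred_ext => w; rewrite mem_index_enum true_and; tauto.
Qed.

Lemma Ev_inv E : pinv E -> Ev E.
Proof.
move=> hE; have [h _] := P_decomp_seq hE (index_enum_uniq ptype).
apply: (Ev_ext _ h) => w; rewrite mem_index_enum true_and; tauto.
Qed.

Lemma term_ge0 E p : 0 <= term E p.
Proof. rewrite /term; case: pb; [exact: (P_ge0 hP (Ev_pat p)) | lra]. Qed.

Lemma term_witness E p w0 : pinv E -> pat w0 = p ->
  term E p = if pb (E w0) then Pp p else R0.
Proof.
move=> hE hw0; rewrite /term; congr (if _ then _ else _).
case: (pb (E w0)) / (boolP (pb (E w0))) => h.
  apply/pbP; exists w0; split=> //; exact/pbP.
apply/pbF => [[w [hw hEw]]]; move/negP: h; apply; apply/pbP.
by apply: (hE w) => //; rewrite hw hw0.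
Qed.

Lemma null_pattern E p w0 : pinv E -> P E = 0 -> pat w0 = p -> E w0 -> Pp p = 0.
Proof.
move=> hE h0 hw0 hEw0.
rewrite (P_decomp hE) (bigD1 p) //= in h0.
move: h0; set rest := bigop.body _ _ _ => h0.
have hrest : 0 <= rest.
  rewrite /rest; apply: (big_ind (fun x => 0 <= x)) => //; [lra | move=> x y; lra | move=> i _; exact: term_ge0].
have ht := term_ge0 E p.
rewrite (term_witness hE hw0) in h0 ht.
have : pb (E w0) = true by apply/pbP.
move=> hb; rewrite hb in h0 ht; lra.
Qed.

End Pat.


Lemma min_above (n : nat) (s : seq 'I_n) (f : 'I_n -> R) x :
  (forall i, i \in s -> x < f i) -> exists m, x < m /\ forall i, i \in s -> m <= f i.
Proof.
elim: s => [|a s IH] h.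
  by exists (x + 1); split=> [|i]; [lra | rewrite in_nil].
have [m [h1 h2]] := IH (fun i hi => h i ltac:(by rewrite in_cons hi orbT)).
have ha := h a (mem_head _ _).
exists (Rmin (f a) m); split; first by apply: Rmin_glb_lt.
move=> i; rewrite in_cons => /orP [/eqP ->|hi]; first exact: Rmin_l.
apply: Rle_trans (Rmin_r _ _) (h2 _ hi).
Qed.

Lemma max_attain (n : nat) (s : seq 'I_n) (f : 'I_n -> R) (d : R) :
  exists m, (m = d \/ exists i, i \in s /\ m = f i) /\ d <= m /\
            forall i, i \in s -> f i <= m.
Proof.
elim: s => [|a s IH].
  by exists d; split; [left | split=> [|i]; [lra | rewrite in_nil]].
have [m [h1 [h2 h3]]] := IH.
case: (Rle_dec (f a) m) => ha.
  exists m; split.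
    case: h1 => [->|[i [hi ->]]]; [by left | by right; exists i; rewrite in_cons hi orbT].
  split=> // i; rewrite in_cons => /orP [/eqP ->|hi] //; exact: h3.
exists (f a); split; first by right; exists a; rewrite mem_head.
split; first lra.
move=> i; rewrite in_cons => /orP [/eqP ->|hi]; first lra.
have := h3 _ hi; lra.
Qed.

Arguments min_above {n} s f x _.
Arguments max_attain {n} s f d.

Section Life.
Variables (Omega : Type) (n : nat) (phi : {set 'I_n} -> bool) (X : 'I_n -> Omega -> R).
Hypothesis hphi : semicoherent phi.
Hypothesis hX0 : forall i w, 0 <= X i w.

Definition W (w : Omega) (t : R) := [set i : 'I_n | Rlt_dec t (X i w) : bool].

Lemma inWP w t i : i \in W w t <-> t < X i w.
Proof. by rewrite inE; case: Rlt_dec. Qed.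

Lemma mono (A B : {set 'I_n}) : A \subset B -> phi A -> phi B.
Proof. by case: hphi => h _; apply: h. Qed.

Lemma glb_char w x : is_glb (failed_times phi X w) x <->
  (0 <= x /\ phi (W w x) = false /\ forall t, 0 <= t < x -> phi (W w t)).
Proof.
split.
- case=> hlb hgr.
  have hx0 : 0 <= x by apply: hgr => t [].
  have hinner : forall t, 0 <= t < x -> phi (W w t).
    move=> t ht; apply/negPn/negP => /negbTE hf.
    have := hlb t (conj (proj1 ht) hf); lra.
  split=> //; split=> //.
  apply/negbTE/negP => hWx.
  have [m [hm1 hm2]] := min_above (enum (W w x)) (fun i => X i w) x
    (fun i hi => (inWP w x i).1 ltac:(by rewrite mem_enum in hi)).
  have : m <= x.
    apply: hgr => t [ht0 hft].
    apply: Rnot_lt_le => htm.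
    have : phi (W w t).
      apply: mono hWx; apply/subsetP => i hi.
      apply/inWP; have := hm2 i ltac:(by rewrite mem_enum); lra.
    by rewrite hft.
  lra.
- case=> hx0 [hWx hin]; split.
  + move=> t [ht0 hft]; apply: Rnot_lt_le => htx.
    by have := hin t (conj ht0 htx); rewrite hft.
  + move=> m hm; apply: hm; split=> //.
Qed.

Definition TC (w : Omega) (j : 'I_n) : Prop :=
  phi (W w (X j w)) = false /\ (0 < X j w -> phi (W w 0)) /\
  (forall k, X k w < X j w -> phi (W w (X k w))).

Lemma Tchar w j : lifetime_is phi X w (X j w) <-> TC w j.
Proof.
rewrite /lifetime_is glb_char /TC.
have hj0 := hX0 j w.
split.
- case=> _ [h1 h2]; split=> //; split.
    by move=> hpos; apply: h2; lra.
  by move=> k hk; apply: h2; split=> //; apply: hX0.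
- case=> h1 [h2 h3]; split=> //; split=> // t [ht0 htx].
  have [m [hm1 [hm2 hm3]]] := max_attain [seq k <- enum 'I_n | Rle_dec (X k w) t : bool]
                              (fun i => X i w) 0.
  have hmt : m <= t.
    case: hm1 => [->|[k [hk ->]]]; first lra.
    by move: hk; rewrite mem_filter; case: Rle_dec.
  have -> : W w t = W w m.
    apply/setP => i; apply/idP/idP => /inWP hi; apply/inWP.
      lra.
    apply: Rnot_le_lt => hit.
    have := hm3 i ltac:(by rewrite mem_filter mem_enum andbT; case: Rle_dec).
    lra.
  case: hm1 => [->|[k [hk ->]]].
    by apply: h2; lra.
  by apply: h3; move: hk; rewrite mem_filter; case: Rle_dec => //= hk _; lra.
Qed.

Definition noties (w : Omega) (j : 'I_n) := forall i, i != j -> X i w <> X j w.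

Lemma sub_W w j t : t < X j w -> j |: W w (X j w) \subset W w t.
Proof.
move=> ht; apply/subsetP => i; rewrite in_setU1 => /orP [/eqP ->|/inWP hi]; apply/inWP => //.
lra.
Qed.

Lemma TC_noties w j : noties w j ->
  (TC w j <-> phi (j |: W w (X j w)) && ~~ phi (W w (X j w))).
Proof.
move=> hnt; rewrite /TC; split.
- case=> h1 [h2 h3]; rewrite h1 /= andbT.
  apply/negPn/negP => /negbTE hf.
  have [i1 hi1] : exists i, i \notin j |: W w (X j w).
    apply/existsP; apply/negP => /existsP hno.
    case: hphi => _ [_ hT].
    suff e : j |: W w (X j w) = setT by rewrite e hT in hf.
    apply/setP => i; rewrite in_setT; apply/negPn/negP => hi; apply: hno; by exists i.
  have hlt : forall i, i \notin j |: W w (X j w) -> X i w < X j w.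
    move=> i; rewrite in_setU1 negb_or => /andP [hij /negP hiW].
    have := hnt i hij; case: (Rlt_dec (X j w) (X i w)) => hc; first by case: hiW; apply/inWP.
    lra.
  have [m [hm1 [hm2 hm3]]] := max_attain [seq k <- enum 'I_n | k \notin j |: W w (X j w)]
                              (fun i => X i w) 0.
  have hmj : m < X j w.
    case: hm1 => [->|[k [hk ->]]].
      have := hlt i1 hi1; have := hX0 i1 w; lra.
    by apply: hlt; move: hk; rewrite mem_filter => /andP [].
  have e : W w m = j |: W w (X j w).
    apply/setP => i; apply/idP/idP.
      move=> /inWP him; apply/negPn/negP => hi.
      have := hm3 i ltac:(by rewrite mem_filter mem_enum andbT); lra.
    by move=> hi; move/subsetP: (sub_W hmj) => /(_ i hi).
  have : phi (W w m).
    case: hm1 => [hm0|[k [hk hmk]]].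
      rewrite hm0; apply: h2; rewrite -hm0; have := hX0 i1 w; have := hlt i1 hi1; lra.
    rewrite hmk; apply: h3; rewrite -hmk //.
  by rewrite e hf.
- case/andP=> hU /negbTE hA; split=> //; split.
    move=> hpos; apply: mono hU; exact: sub_W.
  move=> k hk; apply: mono hU; exact: sub_W.
Qed.

Definition qE (j : 'I_n) (A : {set 'I_n}) (w : Omega) : Prop :=
  (forall i, i \notin A -> i != j -> X i w < X j w) /\
  (forall i, i \in A -> X j w < X i w).

Lemma qE_noties w j (A : {set 'I_n}) : noties w j -> j \notin A -> (qE j A w <-> A = W w (X j w)).
Proof.
move=> hnt hjA; split.
- case=> h1 h2; apply/setP => i; apply/idP/idP.
    by move=> hi; apply/inWP; apply: h2.
  move=> /inWP hi; apply/negPn/negP => hiA.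
  case: (eqVneq i j) => [eij|hij]; first by rewrite eij in hi; lra.
  have := h1 i hiA hij; lra.
- move=> ->; split.
    move=> i /negP hiW hij; have := hnt i hij.
    case: (Rlt_dec (X j w) (X i w)) => hc; first by case: hiW; apply/inWP.
    lra.
  by move=> i /inWP.
Qed.

End Life.


Lemma pb_iff (Q : Prop) (b : bool) : (Q <-> b) -> pb Q = b.
Proof.
move=> h; case: b h => h; first by apply/pbP; apply/h.
by apply/pbF => hq; have := h.1 hq.
Qed.

Section Main.
Variables (Omega : Type) (Ev : (Omega -> Prop) -> Prop) (P : (Omega -> Prop) -> R)
  (n : nat) (phi : {set 'I_n} -> bool) (X : 'I_n -> Omega -> R).
Hypothesis hP : probability Ev P.
Hypothesis hphi : semicoherent phi.
Hypothesis hX : forall i, random_variable Ev (X i).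
Hypothesis hX0 : forall i w, 0 <= X i w.
Hypothesis hnt : no_ties P X.
Variable j : 'I_n.

Lemma W_pat w w' (a : option 'I_n) : pat X w = pat X w' -> W X w (Y X a w) = W X w' (Y X a w').
Proof.
move=> e; apply/setP => i; rewrite !inE.
exact: (pat_bool a (Some i) e).
Qed.

Lemma inv_T : pinv X (fun w => lifetime_is phi X w (X j w)).
Proof.
move=> w w' e; rewrite !(Tchar hphi hX0) /TC.
have e1 : W X w (X j w) = W X w' (X j w') := W_pat (Some j) e.
have e2 : W X w 0 = W X w' 0 := W_pat None e.
rewrite e1 e2; case=> h1 [h2 h3]; split=> //; split.
  move=> hp; apply: h2; exact: (proj2 (pat_lt None (Some j) e) hp).
move=> k hk.
have e3 : W X w (X k w) = W X w' (X k w') := W_pat (Some k) e.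
rewrite -e3; apply: h3; exact: (proj2 (pat_lt (Some k) (Some j) e) hk).
Qed.

Lemma inv_q (A : {set 'I_n}) : pinv X (qE X j A).
Proof.
move=> w w' e [h1 h2]; split.
  move=> i hi hij; exact: (proj1 (pat_lt (Some i) (Some j) e) (h1 i hi hij)).
move=> i hi; exact: (proj1 (pat_lt (Some j) (Some i) e) (h2 i hi)).
Qed.

Lemma inv_tie i : pinv X (fun w => X i w = X j w).
Proof.
move=> w w' e h.
have h1 := pat_lt (Some i) (Some j) e; have h2 := pat_lt (Some j) (Some i) e.
simpl in h1, h2.
apply: Rle_antisym; apply: Rnot_lt_le => hc.
  have := proj2 h2 hc; lra.
have := proj2 h1 hc; lra.
Qed.

Lemma term_nowit E p : ~ (exists w, pat X w = p) -> term P X E p = 0.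
Proof.
move=> hno; rewrite /term; case hb: pb => //.
case: ((pbP _).1 hb) => w [hw _]; case: hno; by exists w.
Qed.

Definition cA (A : {set 'I_n}) := b2R (phi (j |: A)) - b2R (phi A).

Lemma pointwise p : term P X (fun w => lifetime_is phi X w (X j w)) p =
  \big[Rplus/R0]_(A : {set 'I_n} | j \notin A) (term P X (qE X j A) p * cA A).
Proof.
case: (classic (exists w, pat X w = p)) => [[w0 hw0]|hno]; last first.
  rewrite term_nowit // big1 // => A _; rewrite term_nowit //; ring.
case: (classic (noties X w0 j)) => hnt0.
  set A0 := W X w0 (X j w0).
  have hjA0 : j \notin A0 by apply/negP => /inWP; lra.
  rewrite (bigD1 A0) //= big1 => [|A /andP [hjA hA]]; last first.
    rewrite (term_witness P (inv_q (A:=A)) hw0).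
    have -> : pb (qE X j A w0) = false.
      apply: pb_iff; rewrite (qE_noties hnt0 hjA); split=> // e.
      by rewrite e eqxx in hA.
    ring.
  rewrite (term_witness P (inv_q (A:=A0)) hw0) (term_witness P inv_T hw0).
  have -> : pb (qE X j A0 w0) = true by apply: pb_iff; rewrite (qE_noties hnt0 hjA0).
  have -> : pb (lifetime_is phi X w0 (X j w0)) = phi (j |: A0) && ~~ phi A0.
    by apply: pb_iff; rewrite (Tchar hphi hX0) (TC_noties hphi hX0 hnt0).
  rewrite /cA /b2R.
  case hU: (phi (j |: A0)); case hA: (phi A0) => /=; try ring.
  have := mono hphi (subsetUr [set j] A0) hA.
  by rewrite hU.
have [i [hij hi]] : exists i, i != j /\ X i w0 = X j w0.
  apply: NNPP => hc; apply: hnt0 => i hij hi; apply: hc; by exists i.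
have hPp : Pp P X p = 0.
  apply: (null_pattern hP hX (inv_tie (i:=i)) _ hw0 hi).
  by apply: hnt; apply/eqP.
rewrite (term_witness P inv_T hw0) hPp big1 => [|A _].
  by case: pb.
by rewrite (term_witness P (inv_q (A:=A)) hw0) hPp; case: pb; ring.
Qed.

Lemma eq1 : P (fun w => lifetime_is phi X w (X j w)) =
  \big[Rplus/R0]_(A : {set 'I_n} | j \notin A) (q P X j A * cA A).
Proof.
rewrite (P_decomp hP hX inv_T).
have e : forall A, q P X j A = \big[Rplus/R0]_(p : {ffun (option 'I_n * option 'I_n) -> bool}) term P X (qE X j A) p.
  move=> A; exact: (P_decomp hP hX (inv_q (A:=A))).
symmetry.
transitivity (\big[Rplus/R0]_(A : {set 'I_n} | j \notin A)
  \big[Rplus/R0]_(p : {ffun (option 'I_n * option 'I_n) -> bool}) (term P X (qE X j A) p * cA A)).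
  apply: eq_bigr => A _; rewrite e; exact: big_distrl.
rewrite exchange_big /=; symmetry.
apply: eq_bigr => p _; exact: pointwise.
Qed.

End Main.


Close Scope R_scope.

Lemma eq2_alg (n : nat) (j : 'I_n) (qf : {set 'I_n} -> R) (phi : {set 'I_n} -> bool) :
  \big[Rplus/R0]_(A : {set 'I_n})
         Rmult (Rmult (pow (Ropp R1) #|[set j] :\: A|) (qf (A :\ j))) (b2R (phi A)) =
  \big[Rplus/R0]_(A : {set 'I_n} | j \notin A)
         Rmult (qf A) (Rminus (b2R (phi (j |: A))) (b2R (phi A))).
Proof.
rewrite (bigID (fun A : {set 'I_n} => j \in A) xpredT) /=.
rewrite [X in Rplus X _](reindex_onto (fun B => j |: B) (fun A => A :\ j)) /=; last first.
  by move=> A hA; rewrite setD1K.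
have ef : forall B : {set 'I_n}, (j \in j |: B) && ((j |: B) :\ j == B) = (j \notin B).
  move=> B; rewrite setU11 /=; apply/eqP/idP.
    by move=> <-; rewrite setD11.
  exact: setU1K.
rewrite (eq_bigl _ _ ef).
rewrite -big_split /=; apply: eq_bigr => B hB.
have e1 : [set j] :\: (j |: B) = set0.
  by apply/setP => i; rewrite !inE; case: (i == j); rewrite /= ?andbF.
have e2 : [set j] :\: B = [set j].
  apply/setP => i; rewrite !inE; case: eqP => [->|_] /=; by rewrite ?andbF ?andbT ?hB.
have e3 : B :\ j = B.
  apply/setP => i; rewrite !inE; case: eqP => [->|_] /=; by rewrite ?(negbTE hB).
rewrite e1 e2 e3 setU1K // cards0 cards1 /=; ring.
Qed.

Theorem theorem3 (Omega : Type) (Ev : (Omega -> Prop) -> Prop)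
  (P : (Omega -> Prop) -> R) (n : nat) (phi : {set 'I_n} -> bool)
  (X : 'I_n -> Omega -> R) :
  probability Ev P ->
  semicoherent phi ->
  (forall i, random_variable Ev (X i)) ->
  (forall i w, Rle R0 (X i w)) ->
  no_ties P X ->
  forall j : 'I_n,
    P (fun w => lifetime_is phi X w (X j w)) =
      \big[Rplus/R0]_(A : {set 'I_n} | j \notin A)
         Rmult (q P X j A) (Rminus (b2R (phi (j |: A))) (b2R (phi A)))
  /\
    P (fun w => lifetime_is phi X w (X j w)) =
      \big[Rplus/R0]_(A : {set 'I_n})
         Rmult (Rmult (pow (Ropp R1) #|[set j] :\: A|) (q P X j (A :\ j))) (b2R (phi A)).
Proof.
move=> hP hphi hX hX0 hnt j.
have h1 := eq1 hP hphi hX hX0 hnt j.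
split; first exact: h1.
by rewrite eq2_alg.
Qed.
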